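(* Let $1<k<n-1$. For the transposition $(1\ 2)\in\mathfrak{S}_2$ and $i_1,i_2,j_1,j_2\in\{1,\dots,n\}$, $$\Delta^{n,k}_{(1\,2)}\big((i_1,i_2),(j_1,j_2)\big)=\delta(i_1,j_1)\delta(i_2,j_2)\frac{1}{k^2}\binom{n-2}{k-2}+\delta(i_1,j_2)\delta(i_2,j_1)\frac{1}{k^2}\binom{n-2}{k-1},$$ which equals $\frac{1}{k^2}\binom{n-1}{k-1}$ if $i_1=i_2=j_1=j_2$; $\frac{1}{k^2}\binom{n-2}{k-1}$ if $i_1=j_2\ne i_2=j_1$; $\frac{1}{k^2}\binom{n-2}{k-2}$ if $i_1=j_1\neq i_2=j_2$; and $0$ otherwise.
   Context: $\mathcal{A}_r=\{(a_1,\dots,a_r)\in\{1,\dots,n\}^{\times r}:a_1<\dots<a_r\}$. For $\bm{i}\in\{1,\dots,n\}^{\times k}$: $\mathrm{sgn}(\bm{i})=0$ if its entries are not all distinct, otherwise the sign of the unique permutation sorting $\bm{i}$ increasingly; $\mathrm{sr}(\bm{i})$ is $\bm{i}$ sorted in nondecreasing order; $(i,\bm{l})=(i,l_1,\dots,l_{k-1})$. For $\sigma\in\mathfrak{S}_p$ and $\bm{i},\bm{j}\in\{1,\dots,n\}^{\times p}$, the fermionic $\Delta$-function is $$\Delta^{n,k}_\sigma(\bm{i},\bm{j})=\frac{1}{k^p}\sum_{\substack{\bm{l}^{(1)}\in\mathcal{A}_{k-1}\\ \bm{l}^{(1)}\not\ni i_1,j_1}}\cdots\sum_{\substack{\bm{l}^{(p)}\in\mathcal{A}_{k-1}\\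 \bm{l}^{(p)}\not\ni i_p,j_p}}\prod_{s=1}^p\mathrm{sgn}(i_s,\bm{l}^{(s)})\mathrm{sgn}(j_s,\bm{l}^{(s)})\ \delta_\sigma\Big(\big(\mathrm{sr}(i_s,\bm{l}^{(s)})\big)_{s=1}^p,\big(\mathrm{sr}(j_s,\bm{l}^{(s)})\big)_{s=1}^p\Big),$$ where ''$\bm{l}\not\ni i,j$'' means neither $i$ nor $j$ is an entry of $\bm{l}$, and $\delta_\sigma(\bm{a},\bm{b})=\prod_{r=1}^p\delta(a_{\sigma(r)},b_r)$ with $\delta$ the Kronecker delta (equality of sequences). *)

(* Defs.v *)
From mathcomp Require Import all_boot all_order all_algebra all_fingroup.
Set Implicit Arguments. Unset Strict Implicit. Unset Printing Implicit Defensive.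
Import Order.TTheory GRing.Theory Num.Theory.
Local Open Scope ring_scope.

Definition sgn (R : numFieldType) (t : seq nat) : R :=
  if uniq t then
    match [pick s : 'S_(size t) |
             sorted leq [seq nth 0%N t (s x) | x <- enum 'I_(size t)]] with
    | Some s => (-1) ^+ (odd_perm s)
    | None => 0
    end
  else 0.

Definition sr (t : seq nat) : seq nat := sort leq t.

Definition inA (n r : nat) (l : r.-tuple 'I_n) : bool :=
  sorted ltn (map val l).

(* The fermionic Delta-function Delta^{n,k}_sigma(i, j), indices in 'I_n
   (0-based relabelling of {1..n}). *)
Definition Delta (R : numFieldType) (n k p : nat) (sigma : 'S_p)
    (i j : p.-tuple 'I_n) : R :=
  ((k%:R ^+ p)^-1) *
  \sum_(L : {ffun 'I_p -> (k.-1).-tuple 'I_n} |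
          [forall s, [&& inA (L s), tnth i s \notin L s & tnth j s \notin L s]])
    ((\prod_(s < p) (sgn R (val (tnth i s) :: map val (L s)) *
                     sgn R (val (tnth j s) :: map val (L s)))) *
     \prod_(r < p)
       ((sr (val (tnth i (sigma r)) :: map val (L (sigma r)))
         == sr (val (tnth j r) :: map val (L r)) : nat)%:R)).

(* Main.v *)
Require Import Defs.
From mathcomp Require Import all_boot all_order all_algebra all_fingroup.
From mathcomp Require Import zify.
Set Implicit Arguments. Unset Strict Implicit. Unset Printing Implicit Defensive.
Import Order.TTheory GRing.Theory Num.Theory.
Local Open Scope ring_scope.

Lemma sgn_sq (R : numFieldType) (t : seq nat) : uniq t -> sgn R t * sgn R t = 1.
Proof.
move=> ut; rewrite /sgn ut; case: pickP => [s _|none].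
  by rewrite -signr_addb addbb expr0.
exfalso.
have /tuple_permP [p Hp] : perm_eq (sort leq t) (in_tuple t) by rewrite perm_sort.
have := none p; rewrite /=.
have -> : [seq nth 0%N t (p x) | x <- enum 'I_(size t)] = sort leq t.
  rewrite Hp /=; apply: eq_map => x; by rewrite (tnth_nth 0%N).
by rewrite sort_sorted //; exact: leq_total.
Qed.

Lemma sr_eq n (x y : 'I_n) (t u : seq 'I_n) : uniq (x::t) -> uniq (y::u) ->
  (sr (val x :: map val t) == sr (val y :: map val u)) =
  (x |: [set z in t] == y |: [set z in u]).
Proof.
move=> ux uy.
apply/eqP/eqP => [H|H].
  have /(perm_sortP leq_total leq_trans anti_leq) : sr [seq val i | i <- x :: t] = sr [seq val i | i <- y :: u] by [].
  move=> /(perm_map_inj val_inj) P.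
  by apply/setP => z; rewrite !in_setU1 !inE -!in_cons (perm_mem P).
apply/(perm_sortP leq_total leq_trans anti_leq).
have -> : val x :: map val t = map val (x :: t) by [].
have -> : val y :: map val u = map val (y :: u) by [].
apply: perm_map; apply: uniq_perm => // z.
by have := congr1 (fun A : {set 'I_n} => z \in A) H; rewrite !in_setU1 !inE.
Qed.
Lemma inA_uniq n m (t : m.-tuple 'I_n) : inA t -> uniq t.
Proof.
by move=> h; rewrite -(map_inj_uniq val_inj); exact: (sorted_uniq ltn_trans ltnn).
Qed.

Lemma inA_inj n m (t u : m.-tuple 'I_n) : inA t -> inA u ->
  [set z in t] = [set z in u] -> t = u.
Proof.
move=> ht hu E; apply: val_inj; apply: (inj_map val_inj).
apply: (irr_sorted_eq ltn_trans ltnn) => // y.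
apply/mapP/mapP => [] [x xt ->]; exists x => //.
  by have := congr1 (fun A : {set 'I_n} => x \in A) E; rewrite !inE xt => <-.
by have := congr1 (fun A : {set 'I_n} => x \in A) E; rewrite !inE xt => ->.
Qed.

Lemma reindex_sets (V : nmodType) n m (i0 : 'I_n) (P : pred {set 'I_n})
  (F : {set 'I_n} -> V) :
  \sum_(t : m.-tuple 'I_n | inA t && P [set z in t]) F [set z in t] =
  \sum_(A : {set 'I_n} | (#|A| == m) && P A) F A.
Proof.
pose f_t (t : m.-tuple 'I_n) := [set i in t].
pose f_A (A : {set 'I_n}) := [tuple of mkseq (nth i0 (enum A)) m].
have val_fA (A : {set 'I_n}) : #|A| = m -> val (f_A A) = enum A.
  by move=> Am; rewrite -[enum _](mkseq_nth i0) -cardE Am.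
have inc_A (A : {set 'I_n}) : sorted ltn (map val (enum A)).
  rewrite -[enum _](eq_filter (mem_enum _)).
  rewrite -(eq_filter (mem_map val_inj _)) -filter_map.
  by rewrite (sorted_filter ltn_trans) // unlock val_ord_enum iota_ltn_sorted.
have fK (A : {set 'I_n}) : #|A| = m -> f_t (f_A A) = A.
  by move=> cardAm; apply/setP=> x; rewrite inE -(mem_enum A) -val_fA.
rewrite (reindex_onto f_A f_t) /= => [|t ht]; last first.
  have ft_m: #|f_t t| = m.
    rewrite cardsE (card_uniqP _) ?size_tuple //.
    by apply: inA_uniq; case/andP: ht.
  apply: inA_inj; first by rewrite /inA val_fA.
    by case/andP: ht.
  by have := fK _ ft_m; rewrite /f_t => ->.
apply: eq_big => [A|A /andP [/andP [_ h] /eqP e]]; last first.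
  by rewrite -[in RHS]e.
apply/idP/idP => [/andP [/andP [h1 h2] /eqP h3]|/andP [/eqP h1 h2]].
  rewrite -h3; rewrite -/(f_t (f_A A)) in h2.
  rewrite h2 andbT.
  by rewrite cardsE (card_uniqP _) ?size_tuple //; apply: inA_uniq.
by rewrite -/(f_t (f_A A)) fK // h2 eqxx /inA val_fA ?inc_A.
Qed.

Lemma key (T : finType) (A B : {set T}) i1 i2 j1 j2 :
  i1 \notin A -> j1 \notin A -> i2 \notin B -> j2 \notin B -> #|A| = #|B| ->
  i2 |: B = j1 |: A -> i1 |: A = j2 |: B ->
  (i1 = j1 /\ i2 = j2) \/ (i1 = j2 /\ i2 = j1 /\ A = B).
Proof.
move=> i1A j1A i2B j2B cAB E1 E2.
case: (eqVneq i1 j1) => [e11|n11].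
  left; split=> //; subst j1.
  have : i2 \in j2 |: B by rewrite -E2 -E1 setU11.
  by rewrite in_setU1 (negPf i2B) orbF => /eqP.
right.
have BA : B \subset A.
  apply/subsetP => x xB.
  have h1 : x \in i1 |: A by rewrite E2 in_setU1 xB orbT.
  have h2 : x \in j1 |: A by rewrite -E1 in_setU1 xB orbT.
  move: h1 h2; rewrite !in_setU1.
  case xA : (x \in A); first by rewrite !orbT.
  rewrite !orbF => /eqP -> /eqP e; by rewrite e eqxx in n11.
have eAB : A = B by apply/eqP; rewrite eq_sym eqEcard BA cAB leqnn.
subst B.
split; last split=> //.
  have : i1 \in j2 |: A by rewrite -E2 setU11.
  by rewrite in_setU1 (negPf i1A) orbF => /eqP.
have : j1 \in i2 |: A by rewrite E1 setU11.
by rewrite in_setU1 (negPf j1A) orbF => /eqP.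
Qed.

Lemma U1inj (T : finType) (x : T) (A B : {set T}) : x \notin A -> x \notin B ->
  (x |: A == x |: B) = (A == B).
Proof.
move=> xA xB; apply/eqP/eqP => [E|->//]; apply/setP => z.
have := congr1 (fun S : {set T} => z \in S) E; rewrite !in_setU1.
case: (eqVneq z x) => [->|] //=.
by rewrite (negPf xA) (negPf xB).
Qed.

Lemma sum_eq1 (T : finType) (P : pred T) (a : T) : P a ->
  (\sum_(b | P b) (b == a : nat) = 1)%N.
Proof.
move=> Pa; rewrite (bigD1 a) //= eqxx big1 ?addn0 // => b /andP [_ nba].
by rewrite (negPf nba).
Qed.

Lemma C1 n m (x : 'I_n) :
  (\sum_(A : {set 'I_n} | (#|A| == m) && (x \notin A)) 1 = 'C(n.-1, m))%N.
Proof.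
have -> : n.-1 = #|[set~ x]| by rewrite cardsC1 card_ord.
rewrite sum1dep_card -cards_draws.
apply: eq_card => A; rewrite !inE andbC; congr (_ && _).
apply/idP/subsetP => [xA y yA|H]; first by rewrite !inE; apply: contraNneq xA => <-.
by apply/negP => /H; rewrite !inE eqxx.
Qed.

Lemma C2 n m (x y : 'I_n) : x != y ->
  (\sum_(A : {set 'I_n} | (#|A| == m) && (x \notin A) && (y \notin A)) 1 = 'C(n - 2, m))%N.
Proof.
move=> nxy.
have cB : #|~: [set x; y]| = (n - 2)%N.
  by have := cardsC [set x; y]; rewrite cards2 nxy card_ord => e; rewrite -[in RHS]e addKn.
rewrite sum1dep_card -cB -cards_draws.
apply: eq_card => A; rewrite !inE -andbA andbC; congr (_ && _).
apply/andP/subsetP => [[xA yA] z zA|H].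
  by rewrite !inE negb_or; apply/andP; split; [apply: contraNneq xA => <-|apply: contraNneq yA => <-].
by split; apply/negP => /H; rewrite !inE eqxx ?orbT.
Qed.

Lemma C3 n m (x y : 'I_n) : x != y -> (0 < m)%N -> (1 < n)%N ->
  (\sum_(A : {set 'I_n} | (#|A| == m) && (x \notin A) && (y \in A)) 1 = 'C(n - 2, m.-1))%N.
Proof.
move=> nxy m0 n1.
have := @C1 n m x; rewrite (bigID (fun A : {set 'I_n} => y \in A)) /=.
rewrite C2 //.
have -> : n.-1 = (n - 2).+1 by rewrite -subSn // subSS subn1.
move=> e; apply/eqP; rewrite -(eqn_add2r 'C(n - 2, m)) e -{1}(prednK m0) binS prednK // addnC //.
Qed.

Lemma zero_terms n m (i1 i2 j1 j2 : 'I_n) :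
  ~~ (((i1 == j1) && (i2 == j2)) || ((i1 == j2) && (i2 == j1))) ->
  (\sum_(A : {set 'I_n} | (#|A| == m) && ((i1 \notin A) && (j1 \notin A)))
    \sum_(B : {set 'I_n} | (#|B| == m) && ((i2 \notin B) && (j2 \notin B)))
      ((i2 |: B == j1 |: A) && (i1 |: A == j2 |: B) : nat) = 0)%N.
Proof.
move=> H; apply: big1 => A /andP [/eqP cA /andP [i1A j1A]].
apply: big1 => B /andP [/eqP cB /andP [i2B j2B]].
case: eqP => //= E1; case: eqP => //= E2; exfalso.
move: H; case: (key i1A j1A i2B j2B (etrans cA (esym cB)) E1 E2) => [[-> ->]|[-> [-> _]]].
  by rewrite !eqxx.
by rewrite !eqxx orbT.
Qed.

Lemma count n m (i1 i2 j1 j2 : 'I_n) : (0 < m)%N -> (1 < n)%N ->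
  (\sum_(A : {set 'I_n} | (#|A| == m) && ((i1 \notin A) && (j1 \notin A)))
    \sum_(B : {set 'I_n} | (#|B| == m) && ((i2 \notin B) && (j2 \notin B)))
      ((i2 |: B == j1 |: A) && (i1 |: A == j2 |: B) : nat)
  = ((i1 == j1) && (i2 == j2)) * 'C(n - 2, m.-1)
    + ((i1 == j2) && (i2 == j1)) * 'C(n - 2, m))%N.
Proof.
move=> m0 n1.
case: (eqVneq i1 j1) => [e11|n11]; first subst j1.
  case: (eqVneq i2 j2) => [e22|n22]; first subst j2.
    case: (eqVneq i1 i2) => [e12|n12]; first subst i2.
      rewrite /= !mul1n.
      have n1' : n.-1 = (n - 2).+1 by rewrite -subSn // subSS subn1.
      rewrite -(prednK m0) addnC -binS (prednK m0) -n1' -(@C1 n m i1).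
      apply: eq_big => [A|A /andP [/eqP cA /andP [i1A _]]]; first by rewrite andbb.
      rewrite -(@sum_eq1 _ (fun B : {set 'I_n} => (#|B| == m) && ((i1 \notin B) && (i1 \notin B))) A); last by rewrite cA eqxx i1A.
      apply: eq_bigr => B /andP [_ /andP [i1B _]].
      by rewrite !U1inj // eq_sym andbb.
    rewrite /= mul1n mul0n addn0.
    rewrite -(@C3 n m i1 i2 n12 m0 n1) [RHS]big_mkcondr /=.
    apply: eq_big => [A|A /andP [/eqP cA /andP [i1A _]]]; first by rewrite andbb.
    case: ifP => i2A.
      rewrite -(@sum_eq1 _ (fun B : {set 'I_n} => (#|B| == m) && ((i2 \notin B) && (i2 \notin B))) ((i1 |: A) :\ i2)); last first.
        rewrite !inE eqxx /= andbT.
        have := cardsD1 i2 (i1 |: A); rewrite in_setU1 i2A orbT cardsU1 i1A cA add1n.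
        by case => ->.
      apply: eq_bigr => B /andP [_ /andP [i2B _]].
      rewrite [i1 |: A == _]eq_sym andbb.
      congr (nat_of_bool _); apply/idP/idP => [/eqP <-|/eqP ->]; last by rewrite setD1K // in_setU1 i2A orbT.
      by apply/eqP/setP => z; rewrite !inE; case: (eqVneq z i2) => [->|] /=; rewrite ?(negPf i2B).
    apply: big1 => B /andP [_ /andP [i2B _]].
    case: eqP => //= E; exfalso.
    have : i2 \in i1 |: A by rewrite -E setU11.
    by rewrite in_setU1 i2A orbF eq_sym (negPf n12).
  have h : (i1 == j2) && (i2 == i1) = false.
    by apply/negP => /andP [/eqP e1 /eqP e2]; move: n22; rewrite e2 e1 eqxx.
  rewrite zero_terms; first by rewrite h.
  by rewrite eqxx (negPf n22) h.
rewrite /=.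
case: (eqVneq i1 j2) => [e12|n12]; last by rewrite zero_terms ?(negPf n11) ?(negPf n12).
case: (eqVneq i2 j1) => [e21|n21]; last by rewrite zero_terms ?(negPf n11) ?(negPf n21) ?andbF.
subst j1 j2; rewrite !mul0n !mul1n add0n -(@C2 n m i1 i2 n11).
apply: eq_big => [A|A /andP [/eqP cA /andP [i1A i2A]]]; first by rewrite andbA.
rewrite -(@sum_eq1 _ (fun B : {set 'I_n} => (#|B| == m) && ((i2 \notin B) && (i1 \notin B))) A); last by rewrite cA eqxx i1A i2A.
apply: eq_bigr => B /andP [_ /andP [i2B i1B]].
by rewrite !U1inj // eq_sym andbb.
Qed.


Section Main.
Local Open Scope ring_scope.

Lemma main_eq (R : numFieldType) (n k : nat) (i0 : 'I_n) (i1 i2 j1 j2 : 'I_n) :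
  \sum_(L : {ffun 'I_2 -> (k.-1).-tuple 'I_n} |
          [forall s, [&& inA (L s), tnth [tuple i1; i2] s \notin L s & tnth [tuple j1; j2] s \notin L s]])
    ((\prod_(s < 2) (sgn R (val (tnth [tuple i1; i2] s) :: map val (L s)) *
                     sgn R (val (tnth [tuple j1; j2] s) :: map val (L s)))) *
     \prod_(r < 2)
       ((sr (val (tnth [tuple i1; i2] (tperm (0 : 'I_2) 1 r)) :: map val (L (tperm (0 : 'I_2) 1 r)))
         == sr (val (tnth [tuple j1; j2] r) :: map val (L r)) : nat)%:R))
  = (\sum_(A : {set 'I_n} | (#|A| == k.-1) && ((i1 \notin A) && (j1 \notin A)))
    \sum_(B : {set 'I_n} | (#|B| == k.-1) && ((i2 \notin B) && (j2 \notin B)))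
      ((i2 |: B == j1 |: A) && (i1 |: A == j2 |: B) : nat))%:R.
Proof.
set m := k.-1.
pose h (p : m.-tuple 'I_n * m.-tuple 'I_n) : {ffun 'I_2 -> m.-tuple 'I_n} :=
  [ffun s : 'I_2 => if val s == 0%N then p.1 else p.2].
have hb : bijective h.
  exists (fun L : {ffun 'I_2 -> m.-tuple 'I_n} => (L ord0, L (lift ord0 ord0))) => [[a b]|L]; first by rewrite !ffunE.
  apply/ffunP => s; rewrite ffunE /=.
  by case: s => [[|[|//]]] ?; congr (L _); apply: val_inj.
rewrite (reindex h); last exact: onW_bij _ hb.
pose E (A B : {set 'I_n}) : nat := (i2 |: B == j1 |: A) && (i1 |: A == j2 |: B).
pose Q0 (t : m.-tuple 'I_n) := inA t && ((i1 \notin [set z in t]) && (j1 \notin [set z in t])).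
pose Q1 (t : m.-tuple 'I_n) := inA t && ((i2 \notin [set z in t]) && (j2 \notin [set z in t])).
pose Fs (t0 t1 : m.-tuple 'I_n) : R := (E [set z in t0] [set z in t1])%:R.
transitivity (\sum_(p : m.-tuple 'I_n * m.-tuple 'I_n | Q0 p.1 && Q1 p.2) Fs p.1 p.2); last first.
  rewrite -(pair_big Q0 Q1 Fs) /=.
  under eq_bigr => t0 _ do rewrite (reindex_sets m i0 (fun B => (i2 \notin B) && (j2 \notin B)) (fun B => (E [set z in t0] B)%:R)).
  rewrite (reindex_sets m i0 (fun A => (i1 \notin A) && (j1 \notin A)) (fun A => \sum_(B : {set 'I_n} | (#|B| == m) && ((i2 \notin B) && (j2 \notin B))) (E A B)%:R)).
  rewrite natr_sum; apply: eq_bigr => A _; by rewrite natr_sum.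
have t0E : tperm (0 : 'I_2) 1 ord0 = lift ord0 ord0 by rewrite tpermL; apply: val_inj.
have t1E : tperm (0 : 'I_2) 1 (lift ord0 ord0) = ord0.
  have -> : (lift ord0 ord0 : 'I_2) = 1 by apply: val_inj.
  by rewrite tpermR.
have ord2 (s : 'I_2) : s = ord0 \/ s = lift ord0 ord0.
  by case: s => [[|[|//]]] ?; [left|right]; apply: val_inj.
apply: eq_big => [[t0 t1]|[t0 t1] Hc].
  have h0 : h (t0, t1) ord0 = t0 by rewrite ffunE.
  have h1 : h (t0, t1) (lift ord0 ord0) = t1 by rewrite ffunE.
  rewrite /Q0 /Q1 /= !inE.
  apply/forallP/idP => [H|/andP [/and3P [a0 b0 c0] /and3P [a1 b1 c1]] s].
    by have := H ord0; have := H (lift ord0 ord0); rewrite h0 h1 /= => -> ->.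
  by case: (ord2 s) => ->; rewrite ?h0 ?h1 /= ?a0 ?b0 ?c0 ?a1 ?b1 ?c1.
have h0 : h (t0, t1) ord0 = t0 by rewrite ffunE.
have h1 : h (t0, t1) (lift ord0 ord0) = t1 by rewrite ffunE.
move/forallP: Hc => Hc; have := Hc ord0; have := Hc (lift ord0 ord0); rewrite h0 h1 /= => /and3P [a1 b1 c1] /and3P [a0 b0 c0].
rewrite !big_ord_recl !big_ord0 !mulr1 t0E t1E !h0 !h1 /=.
have -> : tnth [tuple i1; i2] ord0 = i1 by [].
have -> : tnth [tuple i1; i2] (lift ord0 ord0) = i2 by [].
have -> : tnth [tuple j1; j2] ord0 = j1 by [].
have -> : tnth [tuple j1; j2] (lift ord0 ord0) = j2 by [].
move: a0 b0 c0 a1 b1 c1.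
rewrite (_ : tnth [tuple i1; i2] ord0 = i1) // (_ : tnth [tuple i1; i2] (lift ord0 ord0) = i2) //.
rewrite (_ : tnth [tuple j1; j2] ord0 = j1) // (_ : tnth [tuple j1; j2] (lift ord0 ord0) = j2) //.
move=> a0 b0 c0 a1 b1 c1.
have U (x : 'I_n) (t : m.-tuple 'I_n) : inA t -> x \notin t -> uniq (x :: t).
  by move=> ht xt; rewrite cons_uniq xt inA_uniq.
have UV (x : 'I_n) (t : m.-tuple 'I_n) : inA t -> x \notin t -> uniq (val x :: map val t).
  move=> ht xt; have -> : val x :: map val t = map val (x :: t) by [].
  by rewrite (map_inj_uniq val_inj) U.
rewrite !sr_eq ?U // /Fs /E.
have cards (t : m.-tuple 'I_n) : inA t -> #|[set z in t]| = m.
  by move=> ht; rewrite cardsE (card_uniqP _) ?size_tuple // inA_uniq.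
case: (eqVneq (i2 |: [set z in t1]) (j1 |: [set z in t0])) => [E1|]; last by move=> _; rewrite /= mulr0n mul0r mulr0.
case: (eqVneq (i1 |: [set z in t0]) (j2 |: [set z in t1])) => [E2|]; last by move=> _; rewrite /= mulr0n !mulr0.
rewrite /= !mulr1n !mul1r mulr1.
have nin (x : 'I_n) (t : m.-tuple 'I_n) : x \notin t -> x \notin [set z in t] by rewrite inE.
case: (key (nin _ _ b0) (nin _ _ c0) (nin _ _ b1) (nin _ _ c1) (etrans (cards _ a0) (esym (cards _ a1))) E1 E2).
  case=> e1 e2; subst j1 j2.
  by rewrite sgn_sq ?UV // sgn_sq ?UV // mulr1.
case=> e1 [e2 /(inA_inj a0 a1) e3]; subst j2 j1 t1.
rewrite [X in _ * X]mulrC mulrACA !sgn_sq ?UV // mulr1 //.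
Qed.

End Main.

Local Open Scope ring_scope.

Ltac simp := rewrite /= ?eqxx ?andbF ?andbT ?andFb ?andTb ?mulr0n ?mulr1n ?mul0r ?mul1r ?addr0 ?add0r ?mulr0.

Theorem lemma3p5 (R : numFieldType) (n k : nat) (hk1 : (1 < k)%N)
    (hkn : (k < n - 1)%N) (i1 i2 j1 j2 : 'I_n) :
  let D := @Delta R n k 2 (tperm (0 : 'I_2) 1) [tuple i1; i2] [tuple j1; j2] in
  let c := ((k%:R ^+ 2)^-1 : R) in
  D = ((i1 == j1) && (i2 == j2) : nat)%:R * c * ('C(n - 2, k - 2))%:R
      + ((i1 == j2) && (i2 == j1) : nat)%:R * c * ('C(n - 2, k - 1))%:R
  /\
  D = (if [&& i1 == i2, i2 == j1 & j1 == j2] then c * ('C(n - 1, k - 1))%:R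
       else if [&& i1 == j2, i2 == j1 & i1 != i2] then c * ('C(n - 2, k - 1))%:R
       else if [&& i1 == j1, i2 == j2 & i1 != i2] then c * ('C(n - 2, k - 2))%:R
       else 0).
Proof.
move=> D c.
have n1 : (1 < n)%N by lia.
have m0 : (0 < k.-1)%N by lia.
have P1 : D = ((i1 == j1) && (i2 == j2) : nat)%:R * c * ('C(n - 2, k - 2))%:R
      + ((i1 == j2) && (i2 == j1) : nat)%:R * c * ('C(n - 2, k - 1))%:R.
  rewrite /D /Delta (main_eq _ _ i1) (count _ _ _ _ m0 n1) -/c.
  rewrite natrD !natrM mulrDr subn1 !subn2.
  by congr (_ + _); rewrite mulrA (mulrC c).
split; first exact: P1.
rewrite P1.
have pas : ('C(n - 1, k - 1) = 'C(n - 2, k - 2) + 'C(n - 2, k - 1))%N.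
  have -> : (n - 1 = (n - 2).+1)%N by rewrite -subSn // subSS.
  have -> : (k - 1 = (k - 2).+1)%N by rewrite -subSn // subSS.
  by rewrite binS addnC.
case: (eqVneq i1 i2) => [e12|n12].
  subst i2; case: (eqVneq i1 j1) => [e|n1']; last by simp.
  subst j1; case: (eqVneq i1 j2) => [e|n2]; last by simp.
  by subst j2; simp; rewrite pas natrD mulrDr.
have n12' : (i1 == i2) = false by apply/negbTE.
have n21 : (i2 == i1) = false by rewrite eq_sym.
case: (eqVneq i1 j2) => [e1|n2].
  subst j2; case: (eqVneq i2 j1) => [e2|n1'].
    by subst j1; (rewrite ?n12' ?n21; simp).
  by case: (eqVneq i1 j1) => [e|]; (rewrite ?n12' ?n21; simp).
case: (eqVneq i1 j1) => [e|n1']; last by (rewrite ?n12' ?n21; simp).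
subst j1; case: (eqVneq i2 j2) => [e|]; (rewrite ?n12' ?n21; simp) => //.
Qed.
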